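(* For any boolean function $f:\{0,1\}^n\to\{0,1\}$ that depends on all $n$ input bits, $Q_E^{na}(f)\ge\lceil n/2\rceil$.
   Context: A function $f$ depends on bit $i$ if there is an $x$ with $f(x)\ne f(x+e_i)$, where $e_i$ is the bit string with 1 in position $i$ and 0 elsewhere, and addition is bitwise mod 2. Nonadaptive exact quantum query model: let $\mathcal H_{\rm in}$ have orthonormal basis $|0\rangle,\dots,|n\rangle$ and let the oracle $O_x$ act by $|i\rangle\mapsto(-1)^{x_i}|i\rangle$ with convention $x_0=0$. A nonadaptive quantum algorithm making $k$ queries consists of an input-independent state $|\psi\rangle\in\mathcal H_{\rm in}^{\otimes k}\otimes\mathcal H_{\rm work}$ (with $\mathcal H_{\rm work}$ a finite-dimensional workspace), to which $O_x^{\otimes k}\otimes I$ is applied, followed by an input-independent two-outcome measurement with outcomes labelled $0,1$. It computes $f$ exactly if for every $x$ the outcome is $f(x)$ with probability $1$. $Q_E^{na}(f)$ is the minimum such $k$. *)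

(* Defs.v *)
From HB Require Import structures.
From mathcomp Require Import all_boot all_order all_algebra.
Set Implicit Arguments. Unset Strict Implicit. Unset Printing Implicit Defensive.
Import Order.TTheory GRing.Theory Num.Theory.
Local Open Scope ring_scope.

Definition bits (n : nat) := {ffun 'I_n -> bool}.

Definition flip_bit (n : nat) (x : bits n) (i : 'I_n) : bits n :=
  [ffun j => if j == i then ~~ x j else x j].

Definition depends_on (n : nat) (f : bits n -> bool) (i : 'I_n) : Prop :=
  exists x : bits n, f x != f (flip_bit x i).

Definition depends_on_all (n : nat) (f : bits n -> bool) : Prop :=
  forall i : 'I_n, depends_on f i.

(* x_i for i in {0,...,n} with the convention x_0 = 0; index i >= 1 refers to
   the bit (i-1) of x : bits n. *)
Definition xbit (n : nat) (x : bits n) (i : 'I_n.+1) : bool :=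
  match unlift ord0 i with Some j => x j | None => false end.

(* Basis of H_in^{(x)k} (x) H_work, with dim H_in = n+1 and dim H_work = d. *)
Definition basis_idx (n k d : nat) := ({ffun 'I_k -> 'I_n.+1} * 'I_d)%type.

Definition apply_oracle (C : numClosedFieldType) (n k d : nat) (x : bits n)
  (psi : basis_idx n k d -> C) : basis_idx n k d -> C :=
  fun t => (-1) ^+ (\sum_(j < k) (xbit x (t.1 j) : nat)) * psi t.

Definition sesq (C : numClosedFieldType) (I : finType) (u : I -> C)
  (M : I -> I -> C) (v : I -> C) : C :=
  \sum_(i : I) \sum_(j : I) (u i)^* * M i j * v j.

Definition hermitian (C : numClosedFieldType) (I : finType) (M : I -> I -> C) :=
  forall i j, M i j = (M j i)^*.

Definition psd (C : numClosedFieldType) (I : finType) (M : I -> I -> C) :=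
  hermitian M /\ forall v : I -> C, 0 <= sesq v M v.

(* A two-outcome measurement is a POVM {E0, E1} with E0 + E1 = I; it is
   determined by the effect E1 with 0 <= E1 <= I, and E0 := I - E1. *)
Definition meas_op (C : numClosedFieldType) (I : finType) (E1 : I -> I -> C)
  (b : bool) : I -> I -> C :=
  if b then E1 else fun i j => (i == j)%:R - E1 i j.

Definition two_outcome_measurement (C : numClosedFieldType) (I : finType)
  (E1 : I -> I -> C) : Prop :=
  psd (meas_op E1 true) /\ psd (meas_op E1 false).

Definition outcome_prob (C : numClosedFieldType) (I : finType)
  (E1 : I -> I -> C) (psi : I -> C) (b : bool) : C :=
  sesq psi (meas_op E1 b) psi.

Definition unit_state (C : numClosedFieldType) (I : finType) (psi : I -> C) :=
  \sum_(i : I) (psi i)^* * psi i = 1.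

Definition na_exact (C : numClosedFieldType) (n : nat) (f : bits n -> bool)
  (k : nat) : Prop :=
  exists (d : nat) (psi : basis_idx n k d -> C) (E1 : basis_idx n k d -> basis_idx n k d -> C),
    [/\ unit_state psi, two_outcome_measurement E1 &
        forall x : bits n, outcome_prob E1 (apply_oracle x psi) (f x) = 1].

(* Main.v *)
Require Import Defs.
From HB Require Import structures.
From mathcomp Require Import all_boot all_order all_algebra.
From mathcomp Require Import ring zify.
Set Implicit Arguments. Unset Strict Implicit. Unset Printing Implicit Defensive.
Import Order.TTheory GRing.Theory Num.Theory.

Local Open Scope ring_scope.

Section Aux.
Variable C : numClosedFieldType.
Variable I : finType.

Definition inner (u v : I -> C) := \sum_i (u i)^* * v i.

Lemma sesq_expand (A : I -> I -> C) (l m : C) (v w : I -> C) :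
  sesq (fun i => l * v i + m * w i) A (fun i => l * v i + m * w i) =
  l^* * l * sesq v A v + l^* * m * sesq v A w + m^* * l * sesq w A v
  + m^* * m * sesq w A w.
Proof.
rewrite /sesq !mulr_sumr -!big_split /=; apply: eq_bigr => i _.
rewrite !mulr_sumr -!big_split /=; apply: eq_bigr => j _.
rewrite rmorphD !rmorphM /=. ring.
Qed.

Lemma sesq_herm (A : I -> I -> C) (v w : I -> C) :
  Defs.hermitian A -> sesq w A v = (sesq v A w)^*.
Proof.
move=> hA; rewrite /sesq raddf_sum /= exchange_big /=; apply: eq_bigr => i _.
rewrite raddf_sum /=; apply: eq_bigr => j _.
rewrite !rmorphM /= (hA j i) !conjCK. by rewrite mulrAC [RHS]mulrAC [v i * _]mulrC.
Qed.

Lemma psd_null (A : I -> I -> C) : Defs.psd A ->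
  forall v, sesq v A v = 0 -> forall w, sesq w A v = 0.
Proof.
move=> [hA pA] v hv w.
set a := sesq w A v; set c := sesq w A w.
have c0 : 0 <= c by apply: pA.
have cr : c^* = c by apply: conj_Creal; apply: ger0_real.
have hb : sesq v A w = a^* by rewrite (sesq_herm _ _ hA).
have := pA (fun i => (c + 1) * v i + (- a) * w i).
rewrite sesq_expand hv hb -/a -/c rmorphD /= cr rmorph1 rmorphN /=.
have -> : (c + 1) * (c + 1) * 0 + (c + 1) * - a * a^* + - a^* * (c + 1) * a +
     - a^* * - a * c = - ((a * a^*) * (c + 2)) by ring.
rewrite oppr_ge0 => h.
have h0 : (a * a^*) * (c + 2) = 0.
  apply/eqP; rewrite eq_le h mulr_ge0 // ?mul_conjC_ge0 //.
  by rewrite addr_ge0.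
move/eqP: h0; rewrite mulf_eq0 mul_conjC_eq0 => /orP [/eqP //|].
have : 0 < c + 2 by rewrite ltr_wpDl.
by move=> /gt_eqF ->.
Qed.


Lemma ortho (A B : I -> I -> C) : Defs.psd A -> Defs.psd B ->
  (forall w v, inner w v = sesq w A v + sesq w B v) ->
  forall u v, inner u u = 1 -> sesq u A u = 1 -> inner v v = 1 ->
  sesq v B v = 1 -> inner u v = 0.
Proof.
move=> pA pB hs u v uu uA vv vB.
have uB : sesq u B u = 0 by move: (hs u u); rewrite uu uA => /esym/eqP; rewrite addrC -subr_eq0 addrK => /eqP.
have vA : sesq v A v = 0 by move: (hs v v); rewrite vv vB => /esym/eqP; rewrite -subr_eq0 addrK => /eqP.
rewrite hs (psd_null pA vA) (sesq_herm _ _ pB.1) (psd_null pB uB) rmorph0.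
by rewrite addr0.
Qed.

Lemma split_meas (E1 : I -> I -> C) w v :
  inner w v = sesq w E1 v + sesq w (meas_op E1 false) v.
Proof.
rewrite /inner /sesq -big_split /=; apply: eq_bigr => i _.
rewrite -big_split /=.
have -> : \sum_j ((w i)^* * E1 i j * v j + (w i)^* * ((i == j)%:R - E1 i j) * v j)
   = \sum_j ((w i)^* * (i == j)%:R * v j).
  by apply: eq_bigr => j _; rewrite -mulrDl -mulrDr addrC subrK.
rewrite (bigD1 i) //= eqxx mulr1 big1 ?addr0 // => j /negbTE.
by rewrite eq_sym => ->; rewrite mulr0 mul0r.
Qed.

End Aux.

Lemma xbit_flip n (x : bits n) i m :
  xbit (flip_bit x i) m = xbit x m (+) (m == lift ord0 i).
Proof.
rewrite /xbit; case: (unliftP ord0 m) => [j ->|->].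
  by rewrite (inj_eq lift_inj) /flip_bit ffunE; case: (j == i); case: (x j).
by rewrite (negbTE (neq_lift _ _)).
Qed.

Definition cnt n k (i : 'I_n) (t : {ffun 'I_k -> 'I_n.+1}) : nat :=
  \sum_(j < k) (t j == lift ord0 i : nat).

Lemma cnt_sum n k (t : {ffun 'I_k -> 'I_n.+1}) : (\sum_(i < n) cnt i t <= k)%N.
Proof.
rewrite /cnt exchange_big /=.
rewrite -[X in (_ <= X)%N]card_ord -sum1_card.
apply: leq_sum => j _.
case: (unliftP ord0 (t j)) => [i0 ->|->].
  rewrite (bigD1 i0) //= eqxx big1 // => i /negbTE.
  by rewrite eq_sym (inj_eq lift_inj) => ->.
by rewrite big1 // => i _; rewrite (negbTE (neq_lift _ _)).
Qed.

Lemma sign_bound (C : numClosedFieldType) (c : nat) :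
  1 - (-1) ^+ c <= (2 * c)%:R :> C.
Proof.
rewrite -signr_odd; case: c => [|c]; first by rewrite /= subrr.
case: (odd c.+1) => /=.
  rewrite expr1 opprK (_ : 1 + 1 = 2%:R :> C) ?ler_nat //; lia.
by rewrite expr0 subrr ler0n.
Qed.

Lemma sign2 (C : numClosedFieldType) (m : nat) : (-1) ^+ (2 * m) = 1 :> C.
Proof. by rewrite exprM sqrrN expr1n expr1n. Qed.

Lemma conj_sign (C : numClosedFieldType) (m : nat) : ((-1) ^+ m)^* = (-1) ^+ m :> C.
Proof. by rewrite rmorphXn /= rmorphN1. Qed.

Lemma oracle_norm (C : numClosedFieldType) n k d (x : bits n)
  (psi : basis_idx n k d -> C) :
  inner (apply_oracle x psi) (apply_oracle x psi) = inner psi psi.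
Proof.
apply: eq_bigr => t _; rewrite /apply_oracle rmorphM /= conj_sign.
rewrite mulrACA -exprD addnn -mul2n sign2 mul1r //.
Qed.

Lemma oracle_inner (C : numClosedFieldType) n k d (x : bits n) i
  (psi : basis_idx n k d -> C) :
  inner (apply_oracle x psi) (apply_oracle (flip_bit x i) psi)
  = \sum_t (psi t)^* * psi t * (-1) ^+ (cnt i t.1).
Proof.
apply: eq_bigr => t _; rewrite /apply_oracle rmorphM /= conj_sign.
rewrite mulrACA -exprD -big_split /=.
have -> : \sum_(j < k) ((xbit x (t.1 j) : nat) + xbit (flip_bit x i) (t.1 j))%N
  = (cnt i t.1 + 2 * \sum_(j < k) (xbit x (t.1 j) && ~~ (t.1 j == lift ord0 i) : nat))%N.
  rewrite /cnt big_distrr -big_split /=; apply: eq_bigr => j _.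
  rewrite xbit_flip.
  by case: (xbit x (t.1 j)); case: (t.1 j == lift ord0 i).
by rewrite exprD sign2 mulr1 mulrC.
Qed.

Local Close Scope ring_scope.

Theorem corollary7p5 (C : numClosedFieldType) (n : nat) (f : bits n -> bool) :
  depends_on_all f -> forall k : nat, na_exact C f k -> uphalf n <= k.
Proof.
move=> hdep k [d [psi [E1 [hu [pE1 pE0] hx]]]].
set p := fun t => ((psi t)^* * psi t)%R.
have p0 : forall t, (0 <= p t)%R by move=> t; rewrite /p mulrC mul_conjC_ge0.
have hsum : (\sum_t p t = 1)%R by [].
have key : forall i : 'I_n, (\sum_t p t * (-1) ^+ (cnt i t.1) = 0)%R.
  move=> i; have [x hfx] := hdep i.
  rewrite -(oracle_inner x i psi).
  have hy : f (flip_bit x i) = ~~ f x by case: (f x) hfx; case: (f (flip_bit x i)).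
  have psdb : forall b, Defs.psd (meas_op E1 b) by case.
  apply: (ortho (psdb (f x)) (psdb (f (flip_bit x i)))).
  - move=> w v; rewrite hy; case: (f x) => /=; first exact: split_meas.
    by rewrite addrC; exact: split_meas.
  - by rewrite oracle_norm.
  - exact: hx.
  - by rewrite oracle_norm.
  - exact: hx.
have hle : ((n%:R : C) <= (2 * k)%:R)%R.
  have -> : ((n%:R : C) = \sum_(i < n) \sum_t p t * (1 - (-1) ^+ (cnt i t.1)))%R.
    rewrite -[in LHS](card_ord n) -sumr_const; apply: eq_bigr => i _.
    by rewrite (eq_bigr (fun t => p t - p t * (-1) ^+ (cnt i t.1))%R) ?sumrB ?key ?hsum ?subr0 // => t _; rewrite mulrBr mulr1.
  apply: (@le_trans _ _ (\sum_(i < n) \sum_t p t * (2 * cnt i t.1)%:R)%R).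
    apply: ler_sum => i _; apply: ler_sum => t _.
    by rewrite ler_wpM2l // sign_bound.
  rewrite exchange_big /=.
  apply: (@le_trans _ _ (\sum_t p t * (2 * k)%:R)%R).
    apply: ler_sum => t _.
    rewrite -mulr_sumr ler_wpM2l // -natr_sum ler_nat -big_distrr /= leq_mul2l.
    by rewrite cnt_sum orbT.
  by rewrite -mulr_suml hsum mul1r.
rewrite ler_nat in hle.
by rewrite leq_uphalf_double -mul2n.
Qed.
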